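(* Let $n=2^m$. The nondeterministic quantum communication complexity of $\mathrm{DFS}$ on these inputs is $\Omega(\log n)$; hence also its exact quantum communication complexity is $\Omega(\log n)$. That is, there is a constant $c>0$ such that for all sufficiently large $m$, every nondeterministic (in particular every exact) quantum communication protocol for $\mathrm{DFS}$ with $n=2^m$ communicates at least $c\log n$ qubits.
   Context: For $r\in\{0,1\}^m$, let $F^r\in\{0,1\}^n$ ($n=2^m$) be the string indexed by $x\in\{0,1\}^m$ with $F^r_x=\sum_i x_i r_i \bmod 2$. For $g\in\{0,1\}^n$, $\mathrm{FS}(F^r,g)=g_r$ (the $r$-th bit of $g$). In the distributed problem $\mathrm{DFS}$, Alice gets $(F^a,g)$ and Bob gets $(F^b,h)$ with $a,b\in\{0,1\}^m$, $g,h\in\{0,1\}^n$, and $\mathrm{DFS}((F^a,g),(F^b,h))=\mathrm{FS}(F^a\oplus F^b,g\oplus h)=(g\oplus h)_{a\oplus b}$. A quantum communication protocol is a two-party protocol in which the parties exchange qubits (cost = number of qubits communicated) and produce an output bit. It is exact if it always outputs the correct value; it is nondeterministic if, for every input, it outputs 1 with positive probability exactly when the function value is 1. $\log$ is base 2. *)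

(* Defs.v *)
From mathcomp Require Import all_boot all_order all_algebra.
Set Implicit Arguments. Unset Strict Implicit. Unset Printing Implicit Defensive.
Import Order.TTheory GRing.Theory Num.Theory.
Local Open Scope ring_scope.

(** Bit strings of length N; qubit i of a computational basis state s is s i. *)
Definition bits (N : nat) := {ffun 'I_N -> bool}.

Section Quantum.
Variable C : numClosedFieldType.  (* amplitudes (e.g. the complex numbers) *)

(** Pure states of N qubits and operators on them, in the computational basis. *)
Definition qstate (N : nat) := bits N -> C.
Definition qop (N : nat) := bits N -> bits N -> C.

Definition apply_op N (U : qop N) (psi : qstate N) : qstate N :=
  fun s => \sum_(t : bits N) U s t * psi t.

Definition unitary N (U : qop N) : Prop :=
  forall s t : bits N, \sum_(r : bits N) (U r s)^* * U r t = (s == t)%:R.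

(** Ownership o : bits N, with o i = true iff Alice holds qubit i. *)
Definition mask N (o : bits N) (p : bool) (s : bits N) : bits N :=
  [ffun i => if o i == p then s i else false].

(** The operator u acting on the qubits owned by party p (true = Alice,
    false = Bob), tensored with the identity on the other party's qubits. *)
Definition local_op N (o : bits N) (p : bool) (u : qop N) : qop N :=
  fun s t => ([forall i, (o i != p) ==> (s i == t i)])%:R
             * u (mask o p s) (mask o p t).

Definition flip N (o : bits N) (i : 'I_N) : bits N :=
  [ffun j => if j == i then ~~ o j else o j].

(** A step of a protocol: a local unitary of Alice (depending on her input),
    a local unitary of Bob (depending on his input), or the transmission of
    qubit i to the other party (costing one qubit of communication). *)
Inductive step (N : nat) (X Y : Type) :=
| StepA of (X -> qop N)
| StepB of (Y -> qop N)
| Send of 'I_N.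

Record protocol (X Y : Type) := Protocol {
  nqubits : nat;
  own0 : bits nqubits;
  steps : seq (step nqubits X Y);
  outq : 'I_nqubits                   (* qubit measured to produce the output *)
}.

Fixpoint valid_steps N X Y (o : bits N) (ss : seq (step N X Y)) : Prop :=
  match ss with
  | [::] => True
  | StepA u :: r => (forall x, unitary (local_op o true (u x))) /\ valid_steps o r
  | StepB v :: r => (forall y, unitary (local_op o false (v y))) /\ valid_steps o r
  | Send i :: r => valid_steps (flip o i) r
  end.

Fixpoint run_steps N X Y (x : X) (y : Y) (o : bits N) (psi : qstate N)
    (ss : seq (step N X Y)) : qstate N :=
  match ss with
  | [::] => psi
  | StepA u :: r => run_steps x y o (apply_op (local_op o true (u x)) psi) r
  | StepB v :: r => run_steps x y o (apply_op (local_op o false (v y)) psi) r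
  | Send i :: r => run_steps x y (flip o i) psi r
  end.

Definition valid_protocol X Y (P : protocol X Y) : Prop :=
  valid_steps (own0 P) (steps P).

Definition init_state N : qstate N := fun s => (s == [ffun => false])%:R.

Definition accept_prob X Y (P : protocol X Y) (x : X) (y : Y) : C :=
  let psi := run_steps x y (own0 P) (@init_state (nqubits P)) (steps P) in
  \sum_(s : bits (nqubits P) | s (outq P)) `|psi s| ^+ 2.

Definition is_send N X Y (st : step N X Y) : bool :=
  if st is Send _ then true else false.

Definition cost X Y (P : protocol X Y) : nat := count (@is_send _ X Y) (steps P).

End Quantum.

(** The distributed Fourier sampling problem, n = 2^m, strings in {0,1}^n
    indexed by x in {0,1}^m. *)
Definition bstring (m : nat) := {ffun bits m -> bool}.

Definition Fr m (r : bits m) : bstring m :=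
  [ffun x : bits m => \big[addb/false]_(i < m) (x i && r i)].

Definition xorv m (a b : bits m) : bits m := [ffun i => a i (+) b i].
Definition xors m (g h : bstring m) : bstring m := [ffun x => g x (+) h x].

Definition FS m (r : bits m) (g : bstring m) : bool := g r.

(** DFS((F^a,g),(F^b,h)) = FS(F^a xor F^b, g xor h) = (g xor h)_{a xor b}
    (F^a xor F^b = F^(a xor b)). *)
Definition DFS m (a : bits m) (g : bstring m) (b : bits m) (h : bstring m) : bool :=
  FS (xorv a b) (xors g h).

(** Each party's input is a pair (F, g) of n-bit strings; inputs are promised
    to have F = F^a for some a. *)
Definition dfs_input m := (bstring m * bstring m)%type.

Definition nondet_DFS (C : numClosedFieldType) m
    (P : protocol C (dfs_input m) (dfs_input m)) : Prop :=
  valid_protocol P /\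
  forall (a : bits m) (g : bstring m) (b : bits m) (h : bstring m),
    (0 < accept_prob P (Fr a, g) (Fr b, h)) <-> DFS a g b h = true.

Definition exact_DFS (C : numClosedFieldType) m
    (P : protocol C (dfs_input m) (dfs_input m)) : Prop :=
  valid_protocol P /\
  forall (a : bits m) (g : bstring m) (b : bits m) (h : bstring m),
    accept_prob P (Fr a, g) (Fr b, h) = (DFS a g b h)%:R.

(* Main.v *)
Require Import Defs.
From mathcomp Require Import all_boot all_order all_algebra ring lra.
Set Implicit Arguments. Unset Strict Implicit. Unset Printing Implicit Defensive.
Require Import Defs.
Import Order.TTheory GRing.Theory Num.Theory.
Local Open Scope ring_scope.

Section Aux.
Variable C : numClosedFieldType.
Variable N : nat.
Implicit Types (o s t a b : bits N) (p : bool).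

Definition merge o p a b : bits N := [ffun k => if o k == p then a k else b k].

Lemma maskK o p s : mask o p (mask o p s) = mask o p s.
Proof. by apply/ffunP=> k; rewrite /mask !ffunE; case: (o k == p). Qed.

Lemma mask_merge1 o p a b : mask o p (merge o p a b) = mask o p a.
Proof. by apply/ffunP=> k; rewrite /mask /merge !ffunE; case: (o k == p). Qed.

Lemma mask_merge2 o p a b : mask o (~~ p) (merge o p a b) = mask o (~~ p) b.
Proof.
apply/ffunP=> k; rewrite /mask /merge !ffunE; case: (o k); case: p => //=.
Qed.

Lemma merge_mask o p s : merge o p (mask o p s) (mask o (~~ p) s) = s.
Proof.
apply/ffunP=> k; rewrite /mask /merge !ffunE; case: (o k); case: p => //=.
Qed.

Lemma factor o p (H1 H2 : bits N -> C) :
  \sum_s H1 (mask o p s) * H2 (mask o (~~ p) s) =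
  (\sum_(a | mask o p a == a) H1 a) * (\sum_(b | mask o (~~ p) b == b) H2 b).
Proof.
rewrite [RHS]mulr_suml.
under [RHS]eq_bigr do rewrite mulr_sumr.
rewrite pair_big_dep /=.
rewrite (reindex_onto (fun ab : bits N * bits N => merge o p ab.1 ab.2)
   (fun s => (mask o p s, mask o (~~ p) s))) /=; last by move=> s _; exact: merge_mask.
apply: eq_big.
  case=> a b /=; rewrite mask_merge1 mask_merge2 xpair_eqE //.
by case=> a b /=; rewrite mask_merge1 mask_merge2 xpair_eqE => /andP[/eqP -> /eqP ->].
Qed.


Lemma forall_mask o p s t :
  [forall i, (o i != p) ==> (s i == t i)] = (mask o (~~ p) t == mask o (~~ p) s).
Proof.
apply/forallP/eqP.
  move=> H; apply/ffunP=> k; rewrite /mask !ffunE; move: (H k); clear H.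
  by case: (o k); case: p => //= /eqP ->.
move=> /ffunP H k; move: (H k); clear H; rewrite /mask !ffunE.
by case: (o k); case: p => //= ->.
Qed.

Lemma sum_pick o p (Q : bits N -> C) s :
  \sum_(b | mask o p b == b) (b == mask o p s)%:R * Q b = Q (mask o p s).
Proof.
rewrite (bigD1 (mask o p s)) /=; last by rewrite maskK.
rewrite eqxx mul1r big1 ?addr0 // => b /andP[_ /negbTE ->]; by rewrite mul0r.
Qed.

Lemma local_core o p (u : qop C N) (P Q : bits N -> C) s :
  \sum_t local_op o p u s t * (P (mask o p t) * Q (mask o (~~ p) t)) =
  (\sum_(a | mask o p a == a) u (mask o p s) a * P a) * Q (mask o (~~ p) s).
Proof.
rewrite /local_op.
transitivity (\sum_t (u (mask o p s) (mask o p t) * P (mask o p t)) *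
     ((mask o (~~ p) t == mask o (~~ p) s)%:R * Q (mask o (~~ p) t))).
  by apply: eq_bigr => t _; rewrite forall_mask; ring.
by rewrite (factor o p (fun a => u (mask o p s) a * P a) (fun b => (b == mask o (~~p) s)%:R * Q b)) sum_pick.
Qed.

End Aux.

Section Run.
Variable C : numClosedFieldType.
Variables X Y : Type.
Variable N : nat.

Definition decomp (o : bits N) (r : nat) (Psi : X -> Y -> qstate C N) : Prop :=
  exists I : finType, #|I| = r /\
  exists F : I -> X -> bits N -> C, exists G : I -> Y -> bits N -> C,
  forall x y s, Psi x y s = \sum_j F j x (mask o true s) * G j y (mask o false s).

Fixpoint fown (o : bits N) (ss : seq (step C N X Y)) : bits N :=
  match ss with
  | [::] => o
  | Send i :: r => fown (flip o i) r
  | _ :: r => fown o r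
  end.

Lemma decomp_A o r Psi (u : X -> qop C N) : decomp o r Psi ->
  decomp o r (fun x y => apply_op (local_op o true (u x)) (Psi x y)).
Proof.
move=> [I [cI [F [G H]]]]; exists I; split => //.
exists (fun j x a => \sum_(a' | mask o true a' == a') u x a a' * F j x a'), G.
move=> x y s; rewrite /apply_op.
under eq_bigr do rewrite H mulr_sumr.
rewrite exchange_big /=; apply: eq_bigr => j _.
exact: (local_core o true (u x) (F j x) (G j y) s).
Qed.

Lemma decomp_B o r Psi (v : Y -> qop C N) : decomp o r Psi ->
  decomp o r (fun x y => apply_op (local_op o false (v y)) (Psi x y)).
Proof.
move=> [I [cI [F [G H]]]]; exists I; split => //.
exists F, (fun j y b => \sum_(b' | mask o false b' == b') v y b b' * G j y b').
move=> x y s; rewrite /apply_op.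
under eq_bigr do rewrite H mulr_sumr.
rewrite exchange_big /=; apply: eq_bigr => j _.
rewrite mulrC -(local_core o false (v y) (G j y) (F j x) s) /=.
by apply: eq_bigr => t _; rewrite [F _ _ _ * _]mulrC.
Qed.

Definition ext (o : bits N) (p : bool) (i : 'I_N) (a : bits N) (b : bool) : bits N :=
  [ffun k => if k == i then (if o i == p then b else false) else a k].

Lemma mask_ext o p i s : mask o p s = ext o p i (mask (flip o i) p s) (s i).
Proof.
apply/ffunP=> k; rewrite /ext /mask /flip !ffunE.
by case: (eqVneq k i) => [->|] //.
Qed.

Lemma sel_factor (o' : bits N) (i : 'I_N) (s : bits N) (b : bool) :
  ((mask o' true s i == b) || ~~ o' i)%:R * ((mask o' false s i == b) || o' i)%:R
  = (s i == b)%:R :> C.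
Proof. by rewrite /mask !ffunE; case: (o' i); rewrite /= ?orbT ?orbF ?mulr1 ?mul1r. Qed.

Lemma decomp_send o r Psi i : decomp o r Psi -> decomp (flip o i) (r * 2) Psi.
Proof.
move=> [I [cI [F [G H]]]]; exists (I * bool)%type; split.
  by rewrite card_prod cI card_bool.
set o' := flip o i.
exists (fun (jb : I * bool) x (a : bits N) => ((a i == jb.2) || ~~ o' i)%:R * F jb.1 x (ext o true i a jb.2)).
exists (fun (jb : I * bool) y (c : bits N) => ((c i == jb.2) || o' i)%:R * G jb.1 y (ext o false i c jb.2)).
move=> x y s; rewrite H.
rewrite -(pair_big xpredT xpredT (fun j b =>
  ((mask o' true s i == b) || ~~ o' i)%:R * F j x (ext o true i (mask o' true s) b) *
  (((mask o' false s i == b) || o' i)%:R * G j y (ext o false i (mask o' false s) b)))) /=.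
apply: eq_bigr => j _.
transitivity (\sum_(b : bool) (s i == b)%:R *
   (F j x (ext o true i (mask o' true s) b) * G j y (ext o false i (mask o' false s) b))).
  rewrite big_bool /=.
  by case E: (s i); rewrite /= ?mul1r ?mul0r ?addr0 ?add0r (mask_ext o true i s) (mask_ext o false i s) E.
by apply: eq_bigr => b _; rewrite -(sel_factor o' i s b); ring.
Qed.

Lemma decomp_run (ss : seq (step C N X Y)) : forall o r Psi, decomp o r Psi ->
  decomp (fown o ss) (r * 2 ^ count (@is_send C N X Y) ss)
    (fun x y => run_steps x y o (Psi x y) ss).
Proof.
elim: ss => [|st ss IH] o r Psi D.
  by rewrite /= expn0 muln1.
case: st => [u|v|i] /=.
- by rewrite add0n; apply: (IH _ _ (fun x y => apply_op (local_op o true (u x)) (Psi x y))); exact: decomp_A.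
- by rewrite add0n; apply: (IH _ _ (fun x y => apply_op (local_op o false (v y)) (Psi x y))); exact: decomp_B.
- rewrite add1n expnS mulnA; apply: IH; exact: decomp_send.
Qed.

Lemma decomp_init o : decomp o 1 (fun _ _ => @init_state C N).
Proof.
exists unit; split; first exact: card_unit.
exists (fun _ _ a => (a == [ffun => false])%:R), (fun _ _ a => (a == [ffun => false])%:R).
move=> x y s; rewrite (eq_bigl (pred1 tt)) ?big_pred1_eq; last by case.
rewrite /init_state -natrM mulnb.
suff -> : (s == [ffun => false]) = (mask o true s == [ffun => false]) && (mask o false s == [ffun => false]) by [].
apply/eqP/andP.
  by move=> ->; split; apply/eqP/ffunP=> k; rewrite /mask !ffunE; case: ifP.
case=> /eqP/ffunP H1 /eqP/ffunP H2; apply/ffunP => k; move: (H1 k) (H2 k).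
by rewrite /mask !ffunE; case: (o k).
Qed.

End Run.

Lemma rank_bound (C : numClosedFieldType) (X Y : Type) (K : finType)
  (al : K -> X -> C) (be : K -> Y -> C) (M : X -> Y -> C) n
  (xs : 'I_n -> X) (ys : 'I_n -> Y) :
  (forall x y, M x y = \sum_k al k x * be k y) ->
  (forall i j, (M (xs i) (ys j) != 0) = (i == j)) -> (n <= #|K|)%N.
Proof.
move=> HM Hd.
pose A : 'M[C]_n := \matrix_(i, j) M (xs i) (ys j).
have eA : A = (\matrix_(i < n, k < #|K|) al (enum_val k) (xs i)) *m
              (\matrix_(k < #|K|, j < n) be (enum_val k) (ys j)).
  apply/matrixP => i j; rewrite !mxE HM.
  under [RHS]eq_bigr do rewrite !mxE.
  rewrite -(big_enum_val (A := K) (fun k => al k (xs i) * be k (ys j))).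
  by apply: eq_bigl.
have dA : A = diag_mx (\row_i M (xs i) (ys i)).
  apply/matrixP => i j; rewrite !mxE.
  case: (eqVneq i j) => [->|nij] /=; first by rewrite mulr1n.
  by rewrite mulr0n; apply/eqP; rewrite -[_ == 0]negbK Hd (negbTE nij).
have uA : A \in unitmx.
  rewrite unitmxE unitfE dA det_diag; apply/prodf_neq0 => i _.
  by rewrite mxE Hd.
have := mxrank_unit uA; rewrite eA => <-.
exact: leq_trans (mxrankM_maxl _ _) (rank_leq_col _).
Qed.

Lemma acc_decomp (C : numClosedFieldType) X Y (P : protocol C X Y) :
  exists K : finType, #|K| = (2 ^ cost P * 2 ^ cost P)%N /\
  exists al : K -> X -> C, exists be : K -> Y -> C,
  forall x y, accept_prob P x y = \sum_k al k x * be k y.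
Proof.
have := decomp_run (steps P) (decomp_init C X Y (own0 P)).
rewrite mul1n => -[I [cI [F [G H]]]].
set o := fown _ _ in H.
set q := outq P.
exists (I * I)%type; split; first by rewrite card_prod cI.
exists (fun jj x => \sum_(a | mask o true a == a)
   ((a q == true) || ~~ o q)%:R * (F jj.1 x a * (F jj.2 x a)^*)).
exists (fun jj y => \sum_(b | mask o false b == b)
   ((b q == true) || o q)%:R * (G jj.1 y b * (G jj.2 y b)^*)).
move=> x y; rewrite /accept_prob -/q.
rewrite -(pair_big xpredT xpredT (fun j j' =>
   (\sum_(a | mask o true a == a)
   ((a q == true) || ~~ o q)%:R * (F j x a * (F j' x a)^*)) *
   (\sum_(b | mask o false b == b)
   ((b q == true) || o q)%:R * (G j y b * (G j' y b)^*)))) /=.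
under [RHS]eq_bigr do under eq_bigr do rewrite -(factor o true
   (fun a => ((a q == true) || ~~ o q)%:R * (F _ x a * (F _ x a)^*))
   (fun b => ((b q == true) || o q)%:R * (G _ y b * (G _ y b)^*))).
rewrite /=.
under [RHS]eq_bigr do rewrite exchange_big /=.
rewrite exchange_big /= big_mkcond /=.
apply: eq_bigr => s _.
rewrite H normCK rmorph_sum mulr_suml.
transitivity (\sum_j \sum_j' (s q == true)%:R *
   ((F j x (mask o true s) * G j y (mask o false s)) *
    (F j' x (mask o true s) * G j' y (mask o false s))^*)).
  case: (s q) => /=.
    apply: eq_bigr => j _; rewrite mulr_sumr; apply: eq_bigr => j' _; by rewrite mul1r.
  by rewrite big1 // => j _; rewrite big1 // => j' _; rewrite mul0r.
apply: eq_bigr => j _; apply: eq_bigr => j' _.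
rewrite -(sel_factor C o q s true) rmorphM /=; ring.
Qed.

Lemma xorv_eq0 m (a b : bits m) : (xorv a b == [ffun => false]) = (a == b).
Proof.
apply/eqP/eqP => [/ffunP H|->].
  by apply/ffunP => k; move: (H k); rewrite !ffunE; case: (a k); case: (b k).
by apply/ffunP => k; rewrite !ffunE addbb.
Qed.

Lemma key (C : numClosedFieldType) m (P : protocol C (dfs_input m) (dfs_input m)) :
  (forall a g b h, (accept_prob P (Fr a, g) (Fr b, h) != 0) = DFS a g b h) ->
  (m <= cost P + cost P)%N.
Proof.
move=> HP.
have [K [cK [al [be Hab]]]] := acc_decomp P.
pose e0 : bstring m := [ffun z : bits m => z == [ffun => false]].
pose z0 : bstring m := [ffun => false].
have H : (#|bits m| <= #|K|)%N.
  apply: (@rank_bound C _ _ K al be (accept_prob P) #|bits m|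
   (fun i => (Fr (enum_val i), z0)) (fun j => (Fr (enum_val j), e0)) Hab) => i j.
  rewrite HP /DFS /FS /xors !ffunE /= xorv_eq0.
  exact: (inj_eq enum_val_inj).
move: H; have -> : #|bits m| = (2 ^ m)%N by rewrite card_ffun card_bool card_ord.
by rewrite cK -expnD leq_exp2l.
Qed.

Unset Implicit Arguments.
Theorem lemma5 (C : numClosedFieldType) :
  exists c : rat, 0 < c /\
  exists m0 : nat, forall m : nat, (m0 <= m)%N ->
    (forall P : protocol C (dfs_input m) (dfs_input m),
        nondet_DFS P -> c * (trunc_log 2 (2 ^ m))%:R <= (cost P)%:R) /\
    (forall P : protocol C (dfs_input m) (dfs_input m),
        exact_DFS P -> c * (trunc_log 2 (2 ^ m))%:R <= (cost P)%:R).
Proof.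
exists (1/2); split; first by [].
exists 0%N => m _.
have fin : forall P : protocol C (dfs_input m) (dfs_input m),
    (m <= cost P + cost P)%N -> 1/2 * (trunc_log 2 (2 ^ m))%:R <= (cost P)%:R :> rat.
  move=> P H; rewrite trunc_expnK //.
  have : (m%:R <= (cost P)%:R + (cost P)%:R :> rat) by rewrite -natrD ler_nat.
  lra.
split=> P [_ HP]; apply: fin; apply: key => a g b h.
  have ge0 : 0 <= accept_prob P (Fr a, g) (Fr b, h).
    by apply: sumr_ge0 => s _; rewrite exprn_ge0.
  have -> : (accept_prob P (Fr a, g) (Fr b, h) != 0) = (0 < accept_prob P (Fr a, g) (Fr b, h)).
    by rewrite lt0r ge0 andbT.
  by case: (HP a g b h) => H1 H2; apply/idP/idP => [/H1|/H2].
rewrite HP; case: (DFS a g b h); by rewrite ?oner_eq0 ?eqxx.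
Qed.
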